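(* Let $k$ be a commutative ring, $A$ a $k$-algebra, $B$ a $k$-algebra with a $k$-algebra morphism $B\to A$, and $\mathfrak{C}$ an $A$-coring (with coinciding left and right $k$-actions). Consider the Morita context $\mathbb{N}_B(\mathfrak{C},{}^*\mathfrak{C})$ with connecting map $\circ:{}_B\mathrm{Hom}_{{}^*\mathfrak{C}}({}^*\mathfrak{C},\mathfrak{C})\otimes{}_B\mathrm{Hom}_{{}^*\mathfrak{C}}(\mathfrak{C},{}^*\mathfrak{C})\to{}_B\mathrm{End}_{{}^*\mathfrak{C}}(\mathfrak{C})$, $\bar\jmath\otimes j\mapsto\bar\jmath\circ j$. Then: (i) $\mathfrak{C}$ is left $B$-locally Frobenius if and only if there exists a locally left invertible element for $\circ$; (ii) $\mathfrak{C}$ is left $B$-locally quasi-Frobenius if and only if $\circ$ is locally surjective. Under any of these conditions, $\mathfrak{C}$ is weakly locally projective as a right $A$-module.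
   Context: $\mathfrak{C}$ has coassociative comultiplication $\Delta(c)=c_{(1)}\otimes_Ac_{(2)}$ and counit $\varepsilon$; ${}^*\mathfrak{C}={}_A\mathrm{Hom}(\mathfrak{C},A)$ is a ring with unit $\varepsilon$ and product $(f*g)(c)=g(c_{(1)}f(c_{(2)}))$. $\mathfrak{C}$ is a $B$-${}^*\mathfrak{C}$-bimodule with left $B$-action through $B\to A$ and right action $c\cdot f=c_{(1)}f(c_{(2)})$; ${}^*\mathfrak{C}$ is a $B$-${}^*\mathfrak{C}$-bimodule with $(b\cdot f)(c)=f(cb)$ and right action by multiplication. ${}_B\mathrm{Hom}_{{}^*\mathfrak{C}}$ denotes bimodule maps. $\mathfrak{C}^B=\{c\in\mathfrak{C}:bc=cb\ \forall b\in B\}$. $\mathfrak{C}$ is left $B$-locally quasi-Frobenius if there are a set $I$ and a $B$-${}^*\mathfrak{C}$-bimodule map $j=(j_\ell)_{\ell\in I}:\mathfrak{C}\to({}^*\mathfrak{C})^I$ such that for all $c_1,\dots,c_n\in\mathfrak{C}$ there is a finitely supported family $(z_\ell)_{\ell\in I}$ in $\mathfrak{C}^B$ with $c_i=\sum_\ell z_\ell\cdot j_\ell(c_i)$ for all $i$; it is left $B$-locally Frobenius if this holds with $I$ a singleton. An element $j\in{}_B\mathrm{Hom}_{{}^*\mathfrak{C}}(\mathfrak{C},{}^*\mathfrak{C})$ is locally left invertible for $\circ$ if for every finitely generated $k$-submodule $F\subseteq\mathfrak{C}$ there is $\bar\jmath_F\in{}_B\mathrm{Hom}_{{}^*\mathfrak{C}}({}^*\mathfrak{C},\mathfrak{C})$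 with $\bar\jmath_F(j(x))=x$ for all $x\in F$. The map $\circ$ is locally surjective if for every finitely generated $k$-submodule $F\subseteq\mathfrak{C}$ there are finitely many $j^\ell\in{}_B\mathrm{Hom}_{{}^*\mathfrak{C}}(\mathfrak{C},{}^*\mathfrak{C})$, $\bar\jmath^\ell\in{}_B\mathrm{Hom}_{{}^*\mathfrak{C}}({}^*\mathfrak{C},\mathfrak{C})$ with $\sum_\ell\bar\jmath^\ell(j^\ell(x))=x$ for all $x\in F$. A right $A$-module $M$ is weakly locally projective if every $m\in M$ equals $\sum_ie_if_i(m)$ for finitely many $e_i\in M$, $f_i\in\mathrm{Hom}_A(M,A)$. *)

(* Defs.v *)
From HB Require Import structures.
From mathcomp Require Import all_boot all_order all_algebra.
From Stdlib Require List.
Set Implicit Arguments. Unset Strict Implicit. Unset Printing Implicit Defensive.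
Import GRing.Theory.
Local Open Scope ring_scope.

(* A k-algebra (k commutative) is a ring A with a ring morphism k -> A whose
   image is central.  Zero rings are allowed. *)
Definition is_kalg (k : comPzRingType) (A : pzRingType) (i : {rmorphism k -> A}) :=
  forall (r : k) (a : A), i r * a = a * i r.

Definition addf (M N : zmodType) (f : M -> N) := forall x y, f (x + y) = f x + f y.

Definition is_bimod (A : pzRingType) (C : zmodType)
    (la : A -> C -> C) (ra : C -> A -> C) :=
  (forall a x y, la a (x + y) = la a x + la a y) /\
  (forall a b x, la (a + b) x = la a x + la b x) /\
  (forall x, la 1 x = x) /\
  (forall a b x, la (a * b) x = la a (la b x)) /\
  (forall a x y, ra (x + y) a = ra x a + ra y a) /\
  (forall a b x, ra x (a + b) = ra x a + ra x b) /\
  (forall x, ra x 1 = x) /\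
  (forall a b x, ra x (a * b) = ra (ra x a) b) /\
  (forall a b x, la a (ra x b) = ra (la a x) b).

(* ---------- equality in C (x)_A C and C (x)_A C (x)_A C ----------
   An element of C (x)_A C is represented by a finite list of pairs
   (sum of elementary tensors).  Two representatives denote the same element
   iff every A-balanced biadditive map (into any abelian group) takes the same
   value on them (universal property of the tensor product). *)
Definition balanced2 (A : pzRingType) (C : zmodType) (la : A -> C -> C)
    (ra : C -> A -> C) (M : zmodType) (f : C -> C -> M) :=
  [/\ (forall x y y', f x (y + y') = f x y + f x y'),
      (forall x x' y, f (x + x') y = f x y + f x' y)
    & (forall x a y, f (ra x a) y = f x (la a y))].

Definition tens2_eq (A : pzRingType) (C : zmodType) (la : A -> C -> C)
    (ra : C -> A -> C) (s t : seq (C * C)) :=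
  forall (M : zmodType) (f : C -> C -> M), balanced2 la ra f ->
    \sum_(p <- s) f p.1 p.2 = \sum_(p <- t) f p.1 p.2.

Definition balanced3 (A : pzRingType) (C : zmodType) (la : A -> C -> C)
    (ra : C -> A -> C) (M : zmodType) (f : C -> C -> C -> M) :=
  [/\ (forall x x' y z, f (x + x') y z = f x y z + f x' y z),
      (forall x y y' z, f x (y + y') z = f x y z + f x y' z),
      (forall x y z z', f x y (z + z') = f x y z + f x y z'),
      (forall x a y z, f (ra x a) y z = f x (la a y) z)
    & (forall x y a z, f x (ra y a) z = f x y (la a z))].

Definition tens3_eq (A : pzRingType) (C : zmodType) (la : A -> C -> C)
    (ra : C -> A -> C) (s t : seq (C * C * C)) :=
  forall (M : zmodType) (f : C -> C -> C -> M), balanced3 la ra f ->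
    \sum_(p <- s) f p.1.1 p.1.2 p.2 = \sum_(p <- t) f p.1.1 p.1.2 p.2.

(* (Delta id) Delta and (id Delta) Delta, as representatives in C(x)C(x)C *)
Definition comul_l (C : Type) (D : C -> seq (C * C)) (c : C) : seq (C * C * C) :=
  flatten [seq [seq (q.1, q.2, p.2) | q <- D p.1] | p <- D c].
Definition comul_r (C : Type) (D : C -> seq (C * C)) (c : C) : seq (C * C * C) :=
  flatten [seq [seq (p.1, q.1, q.2) | q <- D p.2] | p <- D c].

Record coring (k : comPzRingType) (A : pzRingType) (iA : {rmorphism k -> A}) := Coring {
  carrier :> zmodType;
  lact : A -> carrier -> carrier;
  ract : carrier -> A -> carrier;
  comul : carrier -> seq (carrier * carrier);
  counit : carrier -> A;
  bimodP : is_bimod lact ract;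
  kactP : forall (r : k) (x : carrier), lact (iA r) x = ract x (iA r);
  comul_addP : forall x y, tens2_eq lact ract (comul (x + y)) (comul x ++ comul y);
  comul_lP : forall a x, tens2_eq lact ract (comul (lact a x))
                                    [seq (lact a p.1, p.2) | p <- comul x];
  comul_rP : forall a x, tens2_eq lact ract (comul (ract x a))
                                    [seq (p.1, ract p.2 a) | p <- comul x];
  coassocP : forall c, tens3_eq lact ract (comul_l comul c) (comul_r comul c);
  counit_addP : addf counit;
  counit_lP : forall a x, counit (lact a x) = a * counit x;
  counit_rP : forall a x, counit (ract x a) = counit x * a;
  counit_1P : forall c, \sum_(p <- comul c) lact (counit p.1) p.2 = c;
  counit_2P : forall c, \sum_(p <- comul c) ract p.1 (counit p.2) = c
}.

Section CoringNotions.
Variables (k : comPzRingType) (A B : pzRingType).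
Variables (iA : {rmorphism k -> A}) (phi : {rmorphism B -> A}).
Variable (C : coring iA).

Local Notation la := (@lact _ _ _ C).
Local Notation ra := (@ract _ _ _ C).
Local Notation D := (@comul _ _ _ C).

(* *C = _A Hom(C, A): left A-linear maps; elements are functions C -> A *)
Definition in_dual (f : C -> A) := addf f /\ forall a x, f (la a x) = a * f x.

Definition dual_mul (f g : C -> A) : C -> A :=
  fun c => \sum_(p <- D c) g (ra p.1 (f p.2)).

Definition dual_act (c : C) (f : C -> A) : C :=
  \sum_(p <- D c) ra p.1 (f p.2).

Definition bactC (b : B) (c : C) : C := la (phi b) c.
Definition bactD (b : B) (f : C -> A) : C -> A := fun c => f (ra c (phi b)).

Definition homCD (j : C -> (C -> A)) :=
  [/\ (forall c, in_dual (j c)),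
      (forall x y c, j (x + y) c = j x c + j y c),
      (forall b c, j (bactC b c) = bactD b (j c))
    & (forall c f, in_dual f -> j (dual_act c f) = dual_mul (j c) f)].

Definition homDC (jb : (C -> A) -> C) :=
  [/\ (forall f g, in_dual f -> in_dual g -> jb (fun c => f c + g c) = jb f + jb g),
      (forall b f, in_dual f -> jb (bactD b f) = bactC b (jb f))
    & (forall f g, in_dual f -> in_dual g -> jb (dual_mul f g) = dual_act (jb f) g)].

Definition centralB (z : C) := forall b : B, la (phi b) z = ra z (phi b).

Definition kspan (xs : seq C) (x : C) :=
  exists r : nat -> k, x = \sum_(i < size xs) la (iA (r i)) (nth 0 xs i).

Definition locally_quasi_Frobenius :=
  exists (I : Type) (j : I -> C -> (C -> A)), (forall l, homCD (j l)) /\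
    forall cs : seq C, exists (z : I -> C) (supp : seq I),
      (forall l, centralB (z l)) /\
      (forall l, ~ List.In l supp -> z l = 0) /\
      List.NoDup supp /\
      (forall c, c \in cs -> c = \sum_(l <- supp) dual_act (z l) (j l c)).

Definition locally_Frobenius :=
  exists j : C -> (C -> A), homCD j /\
    forall cs : seq C, exists z : C, centralB z /\
      (forall c, c \in cs -> c = dual_act z (j c)).

Definition locally_left_invertible (j : C -> (C -> A)) :=
  homCD j /\ forall xs : seq C, exists jb : (C -> A) -> C, homDC jb /\
    forall x, kspan xs x -> jb (j x) = x.

Definition circ_locally_surjective :=
  forall xs : seq C, exists fam : seq ((C -> (C -> A)) * ((C -> A) -> C)),
    (forall p, List.In p fam -> homCD p.1 /\ homDC p.2) /\
    forall x, kspan xs x -> \sum_(p <- fam) p.2 (p.1 x) = x.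

Definition right_hom_A (f : C -> A) := addf f /\ forall x a, f (ra x a) = f x * a.

Definition weakly_locally_projective :=
  forall m : C, exists fam : seq (C * (C -> A)),
    (forall p, List.In p fam -> right_hom_A p.2) /\
    m = \sum_(p <- fam) ra p.1 (p.2 m).

End CoringNotions.

Arguments locally_left_invertible [k A B iA] phi C j.
Arguments homCD [k A B iA] phi C j.
Arguments homDC [k A B iA] phi C jb.

(* Main.v *)
Require Import Defs.
From HB Require Import structures.
From mathcomp Require Import all_boot all_order all_algebra.
From Stdlib Require Import ClassicalEpsilon FunctionalExtensionality.
Set Implicit Arguments. Unset Strict Implicit. Unset Printing Implicit Defensive.
Import GRing.Theory.
Local Open Scope ring_scope.

Lemma addf0 (M N : zmodType) (f : M -> N) : Defs.addf f -> f 0 = 0.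
Proof. move=> H; apply: (@addrI _ (f 0)); by rewrite addr0 -H addr0. Qed.

Lemma addf_sum (M N : zmodType) (f : M -> N) (I : Type) (s : seq I) (F : I -> M) :
  Defs.addf f -> f (\sum_(i <- s) F i) = \sum_(i <- s) f (F i).
Proof.
move=> H; elim: s => [|x s IH]; first by rewrite !big_nil addf0.
by rewrite !big_cons H IH.
Qed.

Section Aux.
Variables (k : comPzRingType) (A B : pzRingType) (iA : {rmorphism k -> A}) (phi : {rmorphism B -> A}) (C : coring iA).
Local Notation la := (@lact _ _ _ C).
Local Notation ra := (@ract _ _ _ C).
Local Notation D := (@comul _ _ _ C).
Local Notation eps := (@counit _ _ _ C).

Lemma la_addC a (x y : C) : la a (x + y) = la a x + la a y.
Proof. by case: (bimodP C). Qed.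
Lemma la_addA a b (x : C) : la (a + b) x = la a x + la b x.
Proof. by case: (bimodP C) => _ []. Qed.
Lemma la1 (x : C) : la 1 x = x.
Proof. by case: (bimodP C) => _ [] _ []. Qed.
Lemma laM a b (x : C) : la (a * b) x = la a (la b x).
Proof. by case: (bimodP C) => _ [] _ [] _ []. Qed.
Lemma ra_addC a (x y : C) : ra (x + y) a = ra x a + ra y a.
Proof. by case: (bimodP C) => _ [] _ [] _ [] _ []. Qed.
Lemma ra_addA a b (x : C) : ra x (a + b) = ra x a + ra x b.
Proof. by case: (bimodP C) => _ [] _ [] _ [] _ [] _ []. Qed.
Lemma ra1 (x : C) : ra x 1 = x.
Proof. by case: (bimodP C) => _ [] _ [] _ [] _ [] _ [] _ []. Qed.
Lemma raM a b (x : C) : ra x (a * b) = ra (ra x a) b.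
Proof. by case: (bimodP C) => _ [] _ [] _ [] _ [] _ [] _ [] _ []. Qed.
Lemma la_ra a b (x : C) : la a (ra x b) = ra (la a x) b.
Proof. by case: (bimodP C) => _ [] _ [] _ [] _ [] _ [] _ [] _ []. Qed.

Lemma addf_la a : Defs.addf (la a). Proof. exact: la_addC. Qed.
Lemma addf_ra a : Defs.addf (ra^~ a). Proof. move=> x y; exact: ra_addC. Qed.
Lemma addf_raA x : Defs.addf (ra x). Proof. move=> a b; exact: ra_addA. Qed.
Lemma addf_laA x : Defs.addf (la^~ x). Proof. move=> a b; exact: la_addA. Qed.

Definition S2 (M : zmodType) (h : C -> C -> M) (x : C) := \sum_(p <- D x) h p.1 p.2.

Section S2.
Variables (M : zmodType) (h : C -> C -> M).
Hypothesis hb : balanced2 la ra h.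
Lemma S2D x y : S2 h (x + y) = S2 h x + S2 h y.
Proof. by rewrite /S2 (@comul_addP _ _ _ C x y M h hb) big_cat. Qed.
Lemma S2_addf : Defs.addf (S2 h). Proof. exact: S2D. Qed.
Lemma S2_sum (I : Type) (s : seq I) F : S2 h (\sum_(i <- s) F i) = \sum_(i <- s) S2 h (F i).
Proof. exact: addf_sum S2_addf. Qed.
Lemma S2_la a x : S2 h (la a x) = \sum_(p <- D x) h (la a p.1) p.2.
Proof. by rewrite /S2 (@comul_lP _ _ _ C a x M h hb) big_map. Qed.
Lemma S2_ra a x : S2 h (ra x a) = \sum_(p <- D x) h p.1 (ra p.2 a).
Proof. by rewrite /S2 (@comul_rP _ _ _ C a x M h hb) big_map. Qed.
End S2.

Lemma bal_act (f : C -> A) : in_dual f -> balanced2 la ra (fun x y => ra x (f y)).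
Proof.
case=> fa fl; split=> [x y y'|x x' y|x a y]; first by rewrite fa ra_addA.
  by rewrite ra_addC.
by rewrite fl raM.
Qed.

Lemma dual_actE (z : C) (f : C -> A) : dual_act z f = S2 (fun x y => ra x (f y)) z.
Proof. by []. Qed.

Lemma eps_dual : in_dual eps.
Proof. split; [exact: counit_addP | exact: counit_lP]. Qed.

Lemma in_dual_add (f : C -> A) : in_dual f -> Defs.addf f. Proof. by case. Qed.

Lemma dual_mul_eps (f : C -> A) : in_dual f -> dual_mul eps f = f.
Proof.
move=> fd; apply: functional_extensionality => c.
by rewrite /dual_mul -(addf_sum _ _ (in_dual_add fd)) counit_2P.
Qed.

Lemma dual_act_eps (z : C) : dual_act z eps = z.
Proof. exact: counit_2P. Qed.


Lemma dual_act_add (z : C) (f g : C -> A) :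
  dual_act z (fun c => f c + g c) = dual_act z f + dual_act z g.
Proof. rewrite /dual_act -big_split; apply: eq_bigr => p _; by rewrite ra_addA. Qed.

Lemma dual_act_bact (z : C) b (f : C -> A) : centralB phi z -> in_dual f ->
  dual_act z (bactD phi b f) = bactC phi b (dual_act z f).
Proof.
move=> cz fd; rewrite /bactC /bactD /dual_act.
rewrite addf_sum; last exact: addf_la.
under [RHS]eq_bigr => p _ do rewrite la_ra.
have := S2_la (bal_act fd) (phi b) z; rewrite /S2 /= => <-.
by rewrite cz; have := S2_ra (bal_act fd) (phi b) z; rewrite /S2 /= => ->.
Qed.

Lemma dual_act_mul (z : C) (f g : C -> A) : in_dual f -> in_dual g ->
  dual_act z (dual_mul f g) = dual_act (dual_act z f) g.
Proof.
move=> fd gd; case: (fd) => fa fl; case: (gd) => ga gl.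
pose F x y w := ra x (g (ra y (f w))).
have hF : balanced3 la ra F.
  split=> [x x' y w|x y y' w|x y w w'|x a y w|x y a w]; rewrite /F.
  - by rewrite ra_addC.
  - by rewrite ra_addC ga ra_addA.
  - by rewrite fa ra_addA ga ra_addA.
  - by rewrite -raM -gl la_ra.
  - by rewrite -raM fl.
have E := @coassocP _ _ _ C z _ F hF.
have E1 : \sum_(t <- comul_r D z) F t.1.1 t.1.2 t.2 =
          \sum_(p <- D z) \sum_(q <- D p.2) F p.1 q.1 q.2.
  by rewrite /comul_r big_flatten big_map; apply: eq_bigr => p _; rewrite big_map.
have E2 : \sum_(t <- comul_l D z) F t.1.1 t.1.2 t.2 =
          \sum_(p <- D z) \sum_(q <- D p.1) F q.1 q.2 p.2.
  by rewrite /comul_l big_flatten big_map; apply: eq_bigr => p _; rewrite big_map.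
rewrite [RHS]dual_actE /dual_act (S2_sum (bal_act gd)).
transitivity (\sum_(p <- D z) \sum_(q <- D p.2) F p.1 q.1 q.2).
  rewrite /S2 /dual_mul /=; apply: eq_bigr => p _.
  by rewrite addf_sum //; exact: addf_raA.
rewrite -E1 -E E2; apply: eq_bigr => p _.
by rewrite (S2_ra (bal_act gd)).
Qed.

Lemma homDC_dual_act (z : C) : centralB phi z -> homDC phi C (dual_act z).
Proof.
move=> cz; split=> [f g _ _|b f fd|f g fd gd].
- exact: dual_act_add.
- exact: dual_act_bact.
- exact: dual_act_mul.
Qed.

Lemma homDC_act jb (f : C -> A) : homDC phi C jb -> in_dual f -> jb f = dual_act (jb eps) f.
Proof. case=> _ _ H3 fd; by rewrite -H3 ?dual_mul_eps //; exact: eps_dual. Qed.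

Lemma homDC_central jb : homDC phi C jb -> centralB phi (jb eps).
Proof.
move=> H; case: (H) => _ H2 _ b.
pose g := fun c => eps c * phi b.
have gd : in_dual g.
  split=> [x y|a x]; rewrite /g; first by rewrite counit_addP mulrDl.
  by rewrite counit_lP mulrA.
have E : bactD phi b eps = g.
  by apply: functional_extensionality => c; rewrite /bactD counit_rP.
have := H2 b eps eps_dual; rewrite E /bactC => <-.
rewrite (homDC_act H gd) /dual_act /g.
under eq_bigr => p _ do rewrite raM.
rewrite -(addf_sum _ _ (addf_ra (phi b))).
by rewrite counit_2P.
Qed.

End Aux.

Lemma In_mem (T : eqType) (x : T) (s : seq T) : List.In x s <-> x \in s.
Proof.
elim: s => [|y s IH] //=; rewrite in_cons; split.
- by case=> [->|/IH ->]; rewrite ?eqxx ?orbT.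
- by case/orP => [/eqP ->|/IH]; [left|right].
Qed.

Lemma In_map_inv (T U : Type) (f : T -> U) (s : seq T) y :
  List.In y (map f s) -> exists x, List.In x s /\ y = f x.
Proof.
elim: s => [|x s IH] //= [<-|/IH [z [H ->]]]; first by exists x; split; [left|].
by exists z; split; [right|].
Qed.

Lemma In_cat (T : Type) (s t : seq T) y : List.In y (s ++ t) -> List.In y s \/ List.In y t.
Proof.
elim: s => [|x s IH] /=; first by right.
by case=> [->|/IH [H|H]]; [left; left|left; right|right].
Qed.

Lemma In_flatten (T : Type) (ss : seq (seq T)) y :
  List.In y (flatten ss) -> exists s, List.In s ss /\ List.In y s.
Proof.
elim: ss => [|s ss IH] //=; move=> /(@In_cat T s (flatten ss) y) [H|/IH [t [H1 H2]]].
  by exists s; split; [left|].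
by exists t; split; [right|].
Qed.

Lemma NoDup_pairs (T : Type) (g : nat -> T) n m :
  List.NoDup (map (fun i => (i, g i)) (iota m n)).
Proof.
elim: n m => [|n IH] m /=; first by constructor.
constructor; last exact: IH.
move=> H0; have [i [H1 [E _]]] := In_map_inv H0; move/In_mem: H1; rewrite -E mem_iota.
by rewrite ltnn.
Qed.

Lemma In_nth (T : Type) (x0 : T) (s : seq T) i : (i < size s)%N -> List.In (nth x0 s i) s.
Proof. by elim: s i => [|x s IH] [|i] //= hi; [left|right; apply: IH]. Qed.

Lemma In_map (T U : Type) (f : T -> U) (s : seq T) x : List.In x s -> List.In (f x) (map f s).
Proof. by elim: s => [|y s IH] //= [->|H]; [left|right; apply: IH]. Qed.

Section Main.
Variables (k : comPzRingType) (A B : pzRingType) (iA : {rmorphism k -> A})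
  (iB : {rmorphism k -> B}) (phi : {rmorphism B -> A}) (C : coring iA).
Hypothesis hphi : forall r : k, phi (iB r) = iA r.
Local Notation la := (@lact _ _ _ C).
Local Notation ra := (@ract _ _ _ C).
Local Notation D := (@comul _ _ _ C).
Local Notation eps := (@counit _ _ _ C).

Definition klin (T : C -> C) :=
  (forall x y, T (x + y) = T x + T y) /\ (forall r x, T (la (iA r) x) = la (iA r) (T x)).

Lemma kspan_fix T xs x : klin T -> (forall c, c \in xs -> T c = c) -> kspan xs x -> T x = x.
Proof.
case=> Ta Tl Hc [r ->]; rewrite (@addf_sum _ _ T _ _ _ Ta); apply: eq_bigr => i _.
by rewrite Tl Hc // mem_nth.
Qed.

Lemma kspan_mem xs (c : C) : c \in xs -> kspan xs c.
Proof.
move=> cin; have hi : (index c xs < size xs)%N by rewrite index_mem.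
exists (fun i => if (i == index c xs)%N then 1 else 0).
rewrite (bigD1 (Ordinal hi)) //= eqxx rmorph1 la1 nth_index // big1 ?addr0 // => i ne.
rewrite ifN ?rmorph0 ?(addf0 (addf_laA _)) //.
Qed.

Lemma klin_comp j jb : homCD phi C j -> homDC phi C jb -> klin (fun x => jb (j x)).
Proof.
case=> j1 j2 j3 _ [jb1 jb2 _]; split.
- move=> x y; have -> : j (x + y) = fun c => j x c + j y c.
    by apply: functional_extensionality => c; rewrite j2.
  by rewrite jb1.
- move=> r x; have E : la (iA r) x = bactC phi (iB r) x by rewrite /bactC hphi.
  by rewrite E j3 jb2 // /bactC hphi.
Qed.

Lemma klin0 : klin (fun _ => 0).
Proof. by split=> [x y|r x]; rewrite ?addr0 ?(addf0 (addf_la _)). Qed.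

Lemma klin_add T U : klin T -> klin U -> klin (fun x => T x + U x).
Proof.
case=> T1 T2 [U1 U2]; split=> [x y|r x]; first by rewrite T1 U1 addrACA.
by rewrite T2 U2 la_addC.
Qed.

Lemma klin_sum (I : Type) (s : seq I) (T : I -> C -> C) :
  (forall i, List.In i s -> klin (T i)) -> klin (fun x => \sum_(i <- s) T i x).
Proof.
elim: s => [|i s IH] H.
  by split=> [x y|r x]; rewrite !big_nil ?addr0 ?(addf0 (addf_la _)).
have K : klin (fun x => T i x + \sum_(j <- s) T j x).
  apply: klin_add; first by apply: H; left.
  by apply: IH => j hj; apply: H; right.
by case: K => K1 K2; split=> [x y|r x]; rewrite !big_cons.
Qed.

Lemma homCD0 : homCD phi C (fun _ _ => 0).
Proof.
split=> [c|x y c|b c|c f fd] //.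
- by split=> [x y|a x]; rewrite ?addr0 ?mulr0.
- by rewrite addr0.
- apply: functional_extensionality => d; rewrite /dual_mul.
  rewrite big1 // => p _; rewrite (addf0 (addf_raA _)).
  by case: fd => fa _; rewrite (addf0 fa).
Qed.

Lemma central0 : centralB phi (0 : C).
Proof. by move=> b; rewrite (addf0 (addf_la _)) (addf0 (addf_ra _)). Qed.

Lemma rha j d : homCD phi C j -> right_hom_A (fun x => j x d).
Proof.
case=> j1 j2 j3 j4; split=> [x y|x a]; first exact: j2.
pose g := fun c => eps c * a.
have gd : in_dual g.
  split=> [x' y|a' x']; rewrite /g; first by rewrite counit_addP mulrDl.
  by rewrite counit_lP mulrA.
have E : dual_act x g = ra x a.
  rewrite /dual_act /g; under eq_bigr => p _ do rewrite raM.
  by rewrite -(addf_sum _ _ (addf_ra a)) counit_2P.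
rewrite -E j4 // /dual_mul /g.
under eq_bigr => p _ do rewrite counit_rP.
rewrite -big_distrl /=; congr (_ * a).
case: (j1 x) => jxa jxl.
have -> : j x d = j x (\sum_(p <- D d) la (eps p.1) p.2) by rewrite counit_1P.
by rewrite (addf_sum _ _ jxa); apply: eq_bigr => p _; rewrite jxl.
Qed.

Lemma frob_lli : locally_Frobenius phi C <-> exists j, locally_left_invertible phi C j.
Proof.
split.
- case=> j [hj Hz]; exists j; split=> // xs.
  have [z [cz Hc]] := Hz xs; exists (dual_act z); split; first exact: homDC_dual_act.
  move=> x; apply: (@kspan_fix (fun x => dual_act z (j x)) xs x); first exact: (klin_comp hj (homDC_dual_act cz)).
  by move=> c /Hc /esym.
- case=> j [hj Hinv]; exists j; split=> // cs.
  have [jb [hjb Hx]] := Hinv cs; exists (jb eps); split; first exact: homDC_central.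
  move=> c cin; rewrite -(homDC_act hjb) //; last by case: hj => H _ _ _; exact: H.
  by rewrite Hx //; exact: kspan_mem.
Qed.

Lemma qf_circ : locally_quasi_Frobenius phi C <-> circ_locally_surjective phi C.
Proof.
split.
- case=> I [j [hj Hz]] xs; have [z [supp [cz [zs [nd Hc]]]]] := Hz xs.
  exists (map (fun l => (j l, dual_act (z l))) supp); split.
    by move=> p H0; have [l [_ ->]] := In_map_inv H0; split; [exact: hj|exact: homDC_dual_act].
  move=> x; rewrite big_map; apply: (@kspan_fix (fun x => \sum_(l <- supp) dual_act (z l) (j l x)) xs x).
    apply: klin_sum => l _; exact: (klin_comp (hj l) (homDC_dual_act (cz l))).
  by move=> c /Hc /esym.
- move=> Hs.
  pose J (p : nat * (C -> C -> A)) :=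
    if excluded_middle_informative (homCD phi C p.2) then p.2 else (fun _ _ => 0).
  have hJ : forall p, homCD phi C (J p).
    by move=> p; rewrite /J; destruct (excluded_middle_informative (homCD phi C p.2)) => //; exact: homCD0.
  exists (nat * (C -> C -> A))%type, J; split=> // cs.
  have [fam [Hfam Hsum]] := Hs cs.
  pose d : (C -> C -> A) * ((C -> A) -> C) := (fun _ _ => 0, fun _ => 0).
  have Hin : forall i, (i < size fam)%N -> List.In (nth d fam i) fam.
    by move=> i hi; apply: In_nth.
  pose z (p : nat * (C -> C -> A)) : C :=
    if excluded_middle_informative ((p.1 < size fam)%N /\ p.2 = (nth d fam p.1).1)
    then (nth d fam p.1).2 eps else 0.
  exists z, (map (fun i => (i, (nth d fam i).1)) (iota 0 (size fam))).
  split.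
    move=> p; rewrite /z.
    destruct (excluded_middle_informative ((p.1 < size fam)%N /\ p.2 = (nth d fam p.1).1)) as [[h1 h2]|hn].
      by apply: homDC_central; exact: (Hfam _ (Hin _ h1)).2.
    exact: central0.
  split.
    move=> [i l] Hn; rewrite /z.
    destruct (excluded_middle_informative (((i, l).1 < size fam)%N /\ (i, l).2 = (nth d fam (i, l).1).1)) as [[h1 h2]|] => //.
    exfalso; apply: Hn; rewrite /= in h1 h2; rewrite h2.
    apply: (@In_map _ _ (fun i => (i, (nth d fam i).1))).
    by apply/In_mem; rewrite mem_iota add0n h1.
  split; first exact: NoDup_pairs.
  move=> c cin.
  have E : forall i, i \in iota 0 (size fam) ->
     dual_act (z (i, (nth d fam i).1)) (J (i, (nth d fam i).1) c) = (nth d fam i).2 ((nth d fam i).1 c).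
    move=> i; rewrite mem_iota add0n => /andP [_ hi]; have [h1 h2] := Hfam _ (Hin _ hi).
    rewrite /z /J /=.
    destruct (excluded_middle_informative ((i < size fam)%N /\ (nth d fam i).1 = (nth d fam i).1)) as [hy|[]]; last by split.
    destruct (excluded_middle_informative (homCD phi C (nth d fam i).1)) as [hy2|[]] => //=.
    by rewrite -(homDC_act h2) //; case: h1.
  transitivity (\sum_(p <- fam) p.2 (p.1 c)); first by rewrite Hsum //; exact: kspan_mem.
  rewrite (big_nth d) /index_iota subn0 big_map.
  by apply: esym; apply: eq_big_seq.
Qed.

Lemma qf_wlp : locally_quasi_Frobenius phi C -> weakly_locally_projective C.
Proof.
case=> I [j [hj Hz]] m; have [z [supp [cz [_ [_ Hc]]]]] := Hz [:: m].
exists (flatten (map (fun l => map (fun p => (p.1, fun x => j l x p.2)) (D (z l))) supp)).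
split.
  move=> q H0; have [s [Hs Hq]] := In_flatten H0.
  have [l [_ E]] := In_map_inv Hs; rewrite E in Hq.
  have [p [_ ->]] := In_map_inv Hq; exact: rha.
rewrite big_flatten big_map {1}(Hc m (mem_head _ _)); apply: eq_bigr => l _.
by rewrite big_map.
Qed.

Lemma frob_qf : locally_Frobenius phi C -> locally_quasi_Frobenius phi C.
Proof.
case=> j [hj Hz]; exists unit, (fun _ => j); split=> // cs.
have [z [cz Hc]] := Hz cs; exists (fun _ => z), [:: tt].
split=> //; split; first by case=> H; exfalso; apply: H; left.
split; first by constructor; [move=> []|constructor].
by move=> c /Hc E; rewrite big_cons big_nil addr0.
Qed.

End Main.

Theorem theorem2p11 (k : comPzRingType) (A B : pzRingType)
    (iA : {rmorphism k -> A}) (iB : {rmorphism k -> B})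
    (phi : {rmorphism B -> A})
    (hA : is_kalg iA) (hB : is_kalg iB)
    (hphi : forall r : k, phi (iB r) = iA r)
    (C : coring iA) :
  (locally_Frobenius phi C <-> exists j, locally_left_invertible phi C j) /\
  (locally_quasi_Frobenius phi C <-> circ_locally_surjective phi C) /\
  ((locally_Frobenius phi C \/ (exists j, locally_left_invertible phi C j) \/
    locally_quasi_Frobenius phi C \/ circ_locally_surjective phi C) ->
   weakly_locally_projective C).
Proof.
have F := @frob_lli _ _ _ _ _ _ C hphi; have Q := @qf_circ _ _ _ _ _ _ C hphi.
split=> //; split=> // H; apply: (qf_wlp (phi:=phi)).
case: H => [H|[H|[H|H]]].
- exact: frob_qf.
- by apply: frob_qf; apply/F.
- exact: H.
- by apply/Q.
Qed.
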